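(* Let $m,k_1,k_2$ be integers with $m\ge 2$. There exists a set $A\subseteq\mathbb{Z}_m$ such that $\hat{r}_{k_1,k_2}(A,n)=\hat{r}_{k_1,k_2}(\mathbb{Z}_m\setminus A,n)$ for all $n\in\mathbb{Z}_m$ if and only if $m$ is even and one of the following holds: (i) $k_1$ and $k_2$ have the same parity; (ii) $k_1$ and $k_2$ have different parities and $v_2(k_i)<v_2(m)$ for $i=1,2$.
   Context: $\mathbb{Z}_m$ denotes the set of residue classes modulo $m$. For integers $k_1,k_2$, a set $A\subseteq\mathbb{Z}_m$ and $n\in\mathbb{Z}_m$, $\hat{r}_{k_1,k_2}(A,n)$ denotes the number of ordered pairs $(a_1,a_2)\in A\times A$ with $n=k_1a_1+k_2a_2$ in $\mathbb{Z}_m$. For a nonzero integer $k$, $v_2(k)=t$ means $2^t\mid k$ and $2^{t+1}\nmid k$; by convention $v_2(0)=+\infty$. *)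

(* Defs.v *)
From HB Require Import structures.
From mathcomp Require Import all_boot all_order all_algebra.
Set Implicit Arguments. Unset Strict Implicit. Unset Printing Implicit Defensive.
Import Order.TTheory GRing.Theory Num.Theory.

Definition rhat (m : nat) (k1 k2 : int) (A : {set 'Z_m}) (n : 'Z_m) : nat :=
  #|[set p : 'Z_m * 'Z_m | [&& p.1 \in A, p.2 \in A &
        n == (p.1 *~ k1 + p.2 *~ k2)%R]]|.

(* 2-adic valuation of an integer, with v2 0 = +infinity encoded as None. *)
Definition v2 (k : int) : option nat :=
  if k == 0%R then None else Some (logn 2 `|k|%N).

Definition v2_lt (k : int) (m : nat) : bool :=
  match v2 k with
  | None => false
  | Some t => (t < logn 2 m)%N
  end.

(* Main.v *)
Require Import Defs.
From HB Require Import structures.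
From mathcomp Require Import all_boot all_order all_algebra.
From mathcomp Require Import zify.
Import Order.TTheory GRing.Theory Num.Theory.
Set Implicit Arguments. Unset Strict Implicit. Unset Printing Implicit Defensive.


Section Gen.
Variables (m : nat) (k1 k2 : int).
Local Notation Z := ('Z_m).
Definition g (p : Z * Z) : Z := (p.1 *~ k1 + p.2 *~ k2)%R.
Definition rh2 (X Y : {set Z}) (n : Z) : nat :=
  #|[set p : Z * Z | [&& p.1 \in X, p.2 \in Y & n == g p]]|.

Lemma rhat_rh2 A n : rhat k1 k2 A n = rh2 A A n.
Proof. by []. Qed.

Lemma sum_rh2 X Y (P : pred Z) :
  (\sum_(n | P n) rh2 X Y n)%N =
  #|[set p : Z * Z | [&& p.1 \in X, p.2 \in Y & P (g p)]]|.
Proof.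
rewrite -sum1_card (partition_big g P) /=; last by move=> p; rewrite inE => /and3P[].
apply: eq_bigr => n Pn; rewrite /rh2 -sum1_card; apply: eq_bigl => p.
rewrite !inE; case: (p.1 \in X) (p.2 \in Y) => [] [] //=.
rewrite eq_sym; case: eqP => [->|]; rewrite ?eqxx ?Pn ?andbF.
all: by [].
Qed.

Lemma rh2_transl (X Y X' Y' : {set Z}) (t1 t2 n : Z) :
  (forall x, ((x + t1)%R \in X') = (x \in X)) ->
  (forall y, ((y + t2)%R \in Y') = (y \in Y)) ->
  (t1 *~ k1 + t2 *~ k2 = 0)%R ->
  rh2 X Y n = rh2 X' Y' n.
Proof.
move=> hX hY ht.
pose f (p : Z * Z) := (p.1 + t1, p.2 + t2)%R.
have finj : injective f.
  move=> [a b] [c d] e; move: (congr1 fst e) (congr1 snd e) => /= h1 h2.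
  by rewrite (addIr _ h1) (addIr _ h2).
rewrite /rh2 -[RHS](card_preimset _ finj); apply: eq_card => p.
rewrite !inE /= hX hY /g /=.
have -> : ((p.1 + t1) *~ k1 + (p.2 + t2) *~ k2 = p.1 *~ k1 + p.2 *~ k2 + (t1 *~ k1 + t2 *~ k2))%R.
  by rewrite !mulrzDl addrACA.
by rewrite ht addr0.
Qed.

Lemma rh2_splitl X Y B n :
  rh2 X Y n = (rh2 (X :&: B) Y n + rh2 (X :\: B) Y n)%N.
Proof.
rewrite /rh2 -(cardsID [set p : Z * Z | p.1 \in B]); congr addn;
  apply: eq_card => p; rewrite !inE; by case: (p.1 \in B); case: (p.1 \in X); case: (p.2 \in Y); case: (n == g p).
Qed.

Lemma rh2_splitr X Y B n :
  rh2 X Y n = (rh2 X (Y :&: B) n + rh2 X (Y :\: B) n)%N.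
Proof.
rewrite /rh2 -(cardsID [set p : Z * Z | p.2 \in B]); congr addn;
  apply: eq_card => p; rewrite !inE; by case: (p.2 \in B); case: (p.1 \in X); case: (p.2 \in Y); case: (n == g p).
Qed.
End Gen.

Lemma rhat_swap m k1 k2 (A : {set 'Z_m}) n : rhat k1 k2 A n = rhat k2 k1 A n.
Proof.
pose f (p : 'Z_m * 'Z_m) := (p.2, p.1).
have finj : injective f by move=> [a b] [c d] e; move: (congr1 fst e) (congr1 snd e) => /= -> ->.
rewrite /rhat -(card_preimset _ finj); apply: eq_card => p.
by rewrite !inE /= addrC; case: (p.1 \in A); case: (p.2 \in A).
Qed.


Section Conc.
Variable m' : nat.
Local Notation m := m'.+2.
Local Notation Z := ('Z_m).

Lemma val_addZ (x y : Z) : val (x + y)%R = (val x + val y) %% m.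
Proof. by []. Qed.
Lemma val_oppZ (x : Z) : val (- x)%R = (m - val x) %% m.
Proof. by []. Qed.
Lemma val_mulrnZ (x : Z) n : val (x *+ n)%R = (val x * n) %% m.
Proof. by rewrite Zp_mulrn. Qed.
Lemma natr0Z n : m %| n -> (n%:R : Z)%R = 0%R.
Proof. by move=> /dvdnP[c ->]; rewrite natrM (pchar_Zp (p:=m)) // mulr0. Qed.

Lemma intmulZ (x : Z) (k : int) :
  (x *~ k = if (0 <= k)%R then x *+ `|k| else - (x *+ `|k|))%R.
Proof. by case: k => n //=; rewrite NegzE mulrNz. Qed.

Lemma intmul_half (x : Z) (k : int) : (x *+ 2 = 0)%R -> (x *~ k = x *+ odd `|k|)%R.
Proof.
move=> h2.
have E n : (x *+ n = x *+ odd n)%R.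
  by rewrite -{1}(odd_double_half n) mulrnDr -muln2 mulnC mulrnA h2 mul0rn addr0.
have Nx : (- x = x)%R by apply/eqP; rewrite eq_sym -subr_eq0 opprK -mulr2n h2.
rewrite intmulZ; case: ifP => _; rewrite E //.
by case: (odd _); rewrite ?Nx ?oppr0.
Qed.

Variable q : nat.
Hypothesis qm : q %| m.

Lemma dvd_mod n : (q %| n %% m) = (q %| n).
Proof. by rewrite /dvdn (modn_dvdm _ qm). Qed.

Lemma dvd_opp (x : Z) : (q %| val (- x)%R) = (q %| val x).
Proof. by rewrite val_oppZ dvd_mod dvdn_subr ?(ltnW (ltn_ord x)). Qed.
Lemma dvd_intmul (x : Z) k : (q %| val (x *~ k)%R) = (q %| val x * `|k|).
Proof. by rewrite intmulZ; case: ifP => _; rewrite ?dvd_opp Zp_mulrn /Zp_trunc /=; apply: dvd_mod. Qed.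

Lemma dvd_g (k1 k2 : int) (a1 a2 : Z) :
  q %| `|k1| -> coprime q `|k2| ->
  (q %| val (a1 *~ k1 + a2 *~ k2)%R) = (q %| val a2).
Proof.
move=> q1 q2; rewrite val_addZ dvd_mod dvdn_addr; last by rewrite dvd_intmul dvdn_mull.
by rewrite dvd_intmul Gauss_dvdl.
Qed.

Lemma card_mult c : m = c * q -> #|[set x : Z | q %| val x]| = c.
Proof.
move=> mE.
have q0 : 0 < q by case: q mE => //; rewrite muln0.
pose f (j : 'I_c) : Z := inZp (j * q).
have fval (j : 'I_c) : val (f j) = j * q.
  by rewrite /= modn_small // mE ltn_pmul2r.
have finj : injective f.
  by move=> i j e; apply: val_inj; apply/eqP; rewrite -(eqn_pmul2r q0) -!fval e.
rewrite -[RHS](card_ord c) -(card_imset _ finj); apply: eq_card => x.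
rewrite inE; apply/idP/imsetP => [qx|[j _ ->]]; last by rewrite fval dvdn_mull.
have jc : val x %/ q < c by rewrite ltn_divLR // -mE; exact: (ltn_ord x).
exists (Ordinal jc) => //; apply: val_inj; by rewrite fval /= divnK.
Qed.

End Conc.


Section Half.
Variable m' h : nat.
Local Notation m := m'.+2.
Local Notation Z := ('Z_m).
Hypothesis hmE : m = h * 2.

Definition hh : Z := (h%:R)%R.
Definition Ah : {set Z} := [set x : Z | val x < h].

Lemma hh2 : (hh *+ 2 = 0)%R.
Proof. by rewrite /hh -mulrnA -hmE (pchar_Zp (p:=m)). Qed.

Lemma h_lt : h < m.
Proof. by rewrite hmE -{1}(muln1 h) ltn_pmul2l // lt0n; apply/eqP => h0; move: hmE; rewrite h0. Qed.

Lemma val_hh : val hh = h.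
Proof. by rewrite /hh Zp_nat /= /Zp_trunc /= modn_small // h_lt. Qed.

Lemma transA (x : Z) : ((x + hh)%R \in ~: Ah) = (x \in Ah).
Proof.
rewrite !inE val_addZ val_hh.
have : val x < m := ltn_ord x.
move: (val x) => v vm.
case: (ltnP v h) => xh.
  rewrite modn_small; first by apply/negP => /negP; lia.
  lia.
have -> : v + h = (v - h) + m by lia.
rewrite modnDr modn_small; last by lia.
apply/negP => /negP; lia.
Qed.

Lemma transA' (x : Z) : ((x + hh)%R \in Ah) = (x \in ~: Ah).
Proof. by rewrite -transA -addrA -mulr2n hh2 addr0. Qed.


Lemma Nhh : (- hh = hh)%R.
Proof. by apply/eqP; rewrite eq_sym -subr_eq0 opprK -mulr2n hh2. Qed.

Lemma suff_same (k1 k2 : int) : odd `|k1| = odd `|k2| ->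
  forall n, rhat k1 k2 Ah n = rhat k1 k2 (~: Ah) n.
Proof.
move=> hk n; rewrite !rhat_rh2.
apply: (@rh2_transl _ _ _ _ _ _ _ hh hh) => //; try exact: transA.
rewrite !(intmul_half _ hh2) hk.
by case: (odd _); rewrite /= ?mulr0n ?addr0 // -mulr2n hh2.
Qed.

Lemma dvd_gh (k1 : int) : k1 != 0%R -> logn 2 `|k1| < logn 2 m -> gcdn m `|k1| %| h.
Proof.
move=> k0 hl; set n := `|k1|; set d := gcdn m n.
have n0 : 0 < n by rewrite absz_gt0.
have d0 : 0 < d by rewrite gcdn_gt0.
have dm : d %| m := dvdn_gcdl m n.
have dn : d %| n := dvdn_gcdr m n.
set w := m %/ d.
have mE : w * d = m by rewrite divnK.
have w0 : 0 < w by case: (w) mE => //.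
case wo : (odd w).
  have : logn 2 m = logn 2 d.
    by rewrite -mE lognM // logn_coprime // coprime2n.
  have hl' : logn 2 n < logn 2 m := hl.
  have := dvdn_leq_log 2 n0 dn; lia.
have wE : w./2 * 2 = w by rewrite -{2}(odd_double_half w) wo add0n muln2.
have : h * 2 = (w./2 * d) * 2 by rewrite -hmE -mE -{1}wE mulnAC.
move/eqP; rewrite eqn_pmul2r // => /eqP ->; exact: dvdn_mull.
Qed.

Lemma exists_t (k1 : int) : k1 != 0%R -> logn 2 `|k1| < logn 2 m ->
  exists t : Z, (t *~ k1 = hh)%R.
Proof.
move=> k0 hl; have := dvd_gh k0 hl; set n := `|k1|; set d := gcdn m n => dh.
have [a _ ha] := Bezoutl n (ltn0Sn m'.+1).
have [c hc] := dvdnP dh.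
pose t0 : Z := (- (a * c)%:R)%R.
have e : (t0 *+ n = hh)%R.
  have z : ((h + a * c * n)%:R : Z)%R = 0%R.
    apply: natr0Z; rewrite hc (_ : c * d + a * c * n = c * (d + a * n)); last by lia.
    exact: dvdn_mull.
  rewrite /hh; move: z; rewrite natrD => /eqP; rewrite addr_eq0 => /eqP ->.
  by rewrite /t0 mulNrn -mulrnA.
exists t0; rewrite intmulZ e; case: ifP => // _; exact: Nhh.
Qed.

Lemma suff_diff (k1 k2 : int) : ~~ odd `|k1| -> odd `|k2| ->
  (exists t : Z, (t *~ k1 = hh)%R) ->
  forall n, rhat k1 k2 Ah n = rhat k1 k2 (~: Ah) n.
Proof.
move=> o1 o2 [t ht] n; rewrite !rhat_rh2.
have e1 : (hh *~ k1 = 0)%R by rewrite (intmul_half _ hh2) (negbTE o1).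
have e2 : (hh *~ k2 = hh)%R by rewrite (intmul_half _ hh2) o2.
have r1 Y : rh2 k1 k2 Ah Y n = rh2 k1 k2 (~: Ah) Y n.
  apply: (@rh2_transl _ _ _ _ _ _ _ hh 0%R) => //; first exact: transA.
    by move=> y; rewrite addr0.
  by rewrite e1 mul0rz addr0.
have r3 : rh2 k1 k2 setT Ah n = rh2 k1 k2 setT (~: Ah) n.
  apply: (@rh2_transl _ _ _ _ _ _ _ t hh) => //; first by move=> x; rewrite !inE.
    exact: transA.
  by rewrite ht e2 -mulr2n hh2.
move: r3; rewrite (@rh2_splitl _ k1 k2 setT Ah Ah n) (@rh2_splitl _ k1 k2 setT (~: Ah) Ah n) !setTI !setTD.
rewrite -(r1 Ah) -(r1 (~: Ah)); lia.
Qed.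

End Half.


Section Nec.
Variable m' : nat.
Local Notation m := m'.+2.
Local Notation Z := ('Z_m).
Variables (k1 k2 : int) (A : {set Z}).
Hypothesis hA : forall n, rhat k1 k2 A n = rhat k1 k2 (~: A) n.

Lemma nec_card : #|A| = #|~: A|.
Proof.
have : (\sum_(n | predT n) rh2 k1 k2 A A n = \sum_(n | predT n) rh2 k1 k2 (~: A) (~: A) n)%N.
  by apply: eq_bigr => n _; rewrite -!rhat_rh2.
rewrite !sum_rh2.
have E (X : {set Z}) : #|[set p : Z * Z | [&& p.1 \in X, p.2 \in X & predT (g k1 k2 p)]]| = #|setX X X|.
  by apply: eq_card => p; rewrite !inE andbT.
rewrite !E !cardsX => e; nia.
Qed.

Lemma nec_even : m = (#|A| * 2)%N.
Proof.
have : (#|A| + #|~: A|)%N = m by rewrite cardsC card_ord.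
by rewrite -nec_card addnn -muln2.
Qed.

Lemma nec_v2 : odd `|k2| -> 2 ^ logn 2 m %| `|k1| -> False.
Proof.
move=> o2 q1; set q := 2 ^ logn 2 m.
have [c cop mE] := pfactor_coprime (p:=2) (n:=m) isT isT.
have qm : q %| m by rewrite mE dvdn_mull.
have q2 : coprime q `|k2| by rewrite coprimeXl // coprime2n.
set C := [set x : Z | q %| val x].
have : (\sum_(n | q %| val n) rh2 k1 k2 A A n = \sum_(n | q %| val n) rh2 k1 k2 (~: A) (~: A) n)%N.
  by apply: eq_bigr => n _; rewrite -!rhat_rh2.
rewrite !sum_rh2.
have E (X : {set Z}) : #|[set p : Z * Z | [&& p.1 \in X, p.2 \in X & q %| val (g k1 k2 p)]]|
    = #|setX X (X :&: C)|.
  by apply: eq_card => p; rewrite !inE /g dvd_g.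
rewrite !E !cardsX -nec_card => /eqP; rewrite eqn_pmul2l; last first.
  have := nec_even; lia.
move=> /eqP eC.
have cC : #|C| = c by apply: card_mult.
have := cardsID A C; rewrite setDE (setIC C A) (setIC C) -eC cC addnn => cE.
by move: cop; rewrite coprime2n -cE odd_double.
Qed.

End Nec.

Lemma v2_odd m k : odd `|k| -> ~~ odd m -> 0 < m -> v2_lt k m.
Proof.
move=> ok em m0; rewrite /v2_lt /v2.
have -> : (k == 0%R) = false by apply/negP => /eqP k0; move: ok; rewrite k0.
rewrite logn_coprime ?coprime2n // logn_gt0 mem_primes m0 dvdn2 em.
by [].
Qed.

Lemma not_v2 m k : ~~ v2_lt k m -> 2 ^ logn 2 m %| `|k|.
Proof.
rewrite /v2_lt /v2; case: eqP => [-> //|/eqP k0].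
by rewrite -ltnNge => h; rewrite pfactor_dvdn // ?absz_gt0 // ltnW.
Qed.

Lemma v2_ltE m k : v2_lt k m -> k != 0%R /\ logn 2 `|k| < logn 2 m.
Proof. by rewrite /v2_lt /v2; case: eqP. Qed.


Theorem corollary1 (m : nat) (k1 k2 : int) (hm : (1 < m)%N) :
  (exists A : {set 'Z_m},
      forall n : 'Z_m, rhat k1 k2 A n = rhat k1 k2 (~: A) n)
  <->
  (~~ odd m /\
   ((odd `|k1|%N = odd `|k2|%N) \/
    (odd `|k1|%N <> odd `|k2|%N /\ v2_lt k1 m /\ v2_lt k2 m))).
Proof.
case: m hm => [|[|m']] // _; split.
  move=> [A hA].
  have ev : ~~ odd m'.+2 by rewrite (nec_even hA) muln2 odd_double.
  split => //.
  case: (boolP (odd `|k1| == odd `|k2|)) => [/eqP -> | /eqP ne]; first by left.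
  right; split => //.
  have hA' : forall n, rhat k2 k1 A n = rhat k2 k1 (~: A) n.
    by move=> n; rewrite !(rhat_swap k2 k1) hA.
  case o1 : (odd `|k1|).
    split; first exact: v2_odd.
    apply/negPn/negP => /not_v2 h.
    by apply: (nec_v2 hA' o1 h).
  have o2 : odd `|k2| by move: ne; rewrite o1; case: (odd _).
  split; last exact: v2_odd.
  apply/negPn/negP => /not_v2 h.
  by apply: (nec_v2 hA o2 h).
move=> [ev H].
have hE : m'.+2 = m'.+2./2 * 2.
  by rewrite -{1}(odd_double_half m'.+2) (negbTE ev) add0n muln2.
exists (Ah m' m'.+2./2).
case: H => [same | [ne [v1 v2]]]; first exact: suff_same.
case o1 : (odd `|k1|).
  have o2 : ~~ odd `|k2| by move: ne; rewrite o1; case: (odd _).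
  have [k0 hl] := v2_ltE v2.
  move=> n; rewrite !(rhat_swap k1 k2).
  exact: (suff_diff hE o2 o1 (exists_t hE k0 hl)).
have o2 : odd `|k2| by move: ne; rewrite o1; case: (odd _).
have [k0 hl] := v2_ltE v1.
exact: (suff_diff hE (negbT o1) o2 (exists_t hE k0 hl)).
Qed.
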